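(* Let $\mathcal{G}$ be a simple temporal clique and let $\mathcal{T}^+=(V,E^+_T)$ be obtained by the backward construction. For every vertex $v$ that is not a collector, there exists a vertex $v'$ in the same out-tree of $\mathcal{T}^+$ as $v$ (collector or not) and a journey of length at most two from $v'$ to $v$ whose first edge is $e^+(v')$.
   Context: A simple temporal clique is a pair $\mathcal{G}=(G,\lambda)$ where $G=(V,E)$ is the complete graph on a finite vertex set $V$ and $\lambda:E\to\mathbb{N}$ assigns to each edge a single integer label such that any two distinct edges sharing an endpoint have different labels; the label of an arc $(x,y)$ is $\lambda(\{x,y\})$. A journey from $x$ to $y$ is a sequence of vertices $x=u_0,\dots,u_k=y$ ($k\ge1$) with $\lambda(\{u_{i-1},u_i\})<\lambda(\{u_i,u_{i+1}\})$ for $1\le i<k$; its length is $k$ and its first edge is $\{u_0,u_1\}$. For a vertex $v$, $e^+(v)$ is the edge incident to $v$ with largest label. Backward construction: let $E^+$ be the set of arcs $(v,u)$ with $\{u,v\}=e^+(v)$, except that if $e^+(u)=e^+(v)=\{u,v\}$ only one of the two arcs $(u,v),(v,u)$ is included (arbitrarily). Initialize $E^+_T:=E^+$. For every vertex $v$ of in-degree at least $2$ in $(V,E^+)$, let $(u_1,v),\dots,(u_\ell,v)$ be its in-arcs in $E^+$, where $(u_\ell,v)$ has the smallest label; for each $i<\ell$, if $u_i$ has in-degree $0$ in $(V,E^+)$, replace $(u_i,v)$ by $(v,u_i)$ in $E^+_T$, and otherwise remove $(u_i,v)$ from $E^+_T$. Set $\mathcal{T}^+=(V,E^+_T)$. Its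 weakly connected components are called out-trees; a collector is a vertex of in-degree $0$ in $\mathcal{T}^+$. *)

(* Defs.v *)
From mathcomp Require Import all_boot.
Set Implicit Arguments. Unset Strict Implicit. Unset Printing Implicit Defensive.

(* A simple temporal clique on the finite vertex set V: the label of the edge
   {x,y} (x != y) is lam x y = lam y x; values on the diagonal are irrelevant. *)
Definition simple_temporal_clique (V : finType) (lam : V -> V -> nat) : Prop :=
  (forall x y, lam x y = lam y x) /\
  (forall x y z, x != y -> x != z -> y != z -> lam x y != lam x z).

(* is_eplus lam v w : the edge {v,w} is e^+(v), the edge incident to v of
   largest label. *)
Definition is_eplus (V : finType) (lam : V -> V -> nat) (v w : V) : bool :=
  (w != v) && [forall u, (u != v) ==> (lam v u <= lam v w)].

(* E : rel V is a valid choice of the arc set E^+ (the only freedom is the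
   arbitrary orientation when e^+(u) = e^+(v) = {u,v}). *)
Definition valid_Eplus (V : finType) (lam : V -> V -> nat) (E : rel V) : Prop :=
  (forall v u, E v u -> is_eplus lam v u) /\
  (forall v u, is_eplus lam v u -> E v u || E u v) /\
  (forall v u, ~~ (E v u && E u v)).

Definition indeg (V : finType) (E : rel V) (v : V) : nat := #|[set u | E u v]|.

Definition min_in_arc (V : finType) (lam : V -> V -> nat) (E : rel V) (u v : V) : bool :=
  [forall w, E w v ==> (lam u v <= lam w v)].

Definition ET (V : finType) (lam : V -> V -> nat) (E : rel V) : rel V :=
  fun x y =>
    (E x y && ((indeg E y < 2) || min_in_arc lam E x y))
    || [&& E y x, 2 <= indeg E x, ~~ min_in_arc lam E y x & indeg E y == 0].

(* same weakly connected component (out-tree) of (V, R) *)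
Definition same_out_tree (V : finType) (R : rel V) (x y : V) : bool :=
  connect (fun a b => R a b || R b a) x y.

Definition collector (V : finType) (R : rel V) (v : V) : bool :=
  [forall u, ~~ R u v].

(* A journey from x along the vertex sequence x :: p (p nonempty, ending at y):
   consecutive vertices distinct (edges of the clique) and strictly increasing
   labels.  Its length is size p and its first edge is {x, head x p}. *)
Definition journey (V : finType) (lam : V -> V -> nat) (x : V) (p : seq V) (y : V) : bool :=
  [&& 0 < size p, last x p == y, path (fun a b => a != b) x p
    & sorted ltn (pairmap lam x p)].

(* Main.v *)
Require Import Defs.
From mathcomp Require Import all_boot.

Theorem lemma6 (V : finType) (lam : V -> V -> nat) (E : rel V) :
  simple_temporal_clique lam ->
  valid_Eplus lam E ->
  forall v : V, ~~ collector (ET lam E) v ->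
  exists (v' : V) (p : seq V),
    [/\ same_out_tree (ET lam E) v' v,
        journey lam v' p v,
        size p <= 2
      & is_eplus lam v' (head v' p)].
Proof.
move=> [lsym ldist] [Eep [_ _]] v.
rewrite /collector negb_forall => /existsP [u]; rewrite negbK => Huv.
have Huv' := Huv.
move: Huv' => /orP [/andP [Euv _] | /and4P [Evu _ nmin _]].
- have ep := Eep _ _ Euv.
  exists u, [:: v]; split => //.
  + by apply: connect1; rewrite Huv.
  + move: ep => /andP [vu _].
    by rewrite /journey /= eq_sym vu eqxx.
- have [w Ewu wmin] := @arg_minnP V v (fun w => E w u) (fun w => lam w u) Evu.
  have epw := Eep _ _ Ewu.
  have epv := Eep _ _ Evu.
  have minw : min_in_arc lam E w u.
    by apply/forallP => x; apply/implyP => /wmin.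
  have wv : w != v by apply/eqP => ew; rewrite -ew minw in nmin.
  move: epw => /andP [uw _]; move: epv => /andP [uv _].
  have lt : lam w u < lam u v.
    have h1 : lam u w != lam u v by apply: ldist; rewrite // eq_sym.
    have h2 : lam w u <= lam v u by exact: wmin.
    by rewrite ltn_neqAle (lsym w u) h1 /= -(lsym w u) (lsym u v).
  exists w, [:: u; v]; split => //.
  + have c1 : (fun a b => ET lam E a b || ET lam E b a) w u.
      by rewrite /ET Ewu minw orbT.
    have c2 : (fun a b => ET lam E a b || ET lam E b a) u v by rewrite Huv.
    by rewrite /same_out_tree; apply: (connect_trans (y:=u)); apply: connect1.
  + by rewrite /journey /= eq_sym uw uv lt eqxx.
  + exact: Eep.
Qed.
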